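(* Let $(X,d,\mu)$ be an unbounded space of homogeneous type with geometric constants $\tau\geq1$ and $A\geq1$. Let $\mathcal{K}$ be a family of symmetric Markov kernels on $X$ such that there exist $0<\gamma<\tfrac1\tau$ and $H\geq1$ with $\mathcal{K}\subset\mathcal{H}(\gamma,H)$. Then there is a constant $C$ depending only on $\tau,A,\gamma,H$ such that \[\mathcal{K}^*f(x)\leq C\,Mf(x)\] for every $x\in X$ and every measurable function $f$, where $\mathcal{K}^*f(x)=\sup_{K\in\mathcal{K}}\left|\int_XK(x,y)f(y)\,d\mu(y)\right|$ and $Mf(x)=\sup_{B\ni x}\mu(B)^{-1}\int_B|f|\,d\mu$, the supremum being over all $d$-balls $B$ containing $x$.
   Context: A quasi-distance on a set $X$ is a nonnegative symmetric function $d$ on $X\times X$ vanishing exactly on the diagonal with $d(x,z)\leq\tau[d(x,y)+d(y,z)]$ for all $x,y,z$ and some $\tau\geq1$. Balls are $B(x,r)=\{y:d(x,y)<r\}$. $(X,d,\mu)$ is a space of homogeneous type if $\mu$ is a positive measure on a $\sigma$-algebra containing all $d$-balls with $0<\mu(B(x,2r))\leq A\mu(B(x,r))<\infty$ for all $x\in X$, $r>0$ and some $A\geq1$; $\tau$ and $A$ are its geometric constants. Unbounded means $\mu(X)=+\infty$. A symmetric Markov kernel on $X$ is a nonnegative, symmetric, measurable $K$ on $X\times X$ with $\int_XK(x,y)\,d\mu(y)=1$ for every $x$. $K\in\mathcal{H}(\gamma,H)$ means $\sup_{\eta\in B(y,\gamma d(x,y))}K(x,\eta)\leq H\inf_{\eta\in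 B(y,\gamma d(x,y))}K(x,\eta)$ for all $x,y\in X$ with $y\neq x$. *)

(* Defs.v *)
From HB Require Import structures.
From mathcomp Require Import all_boot all_order all_algebra.
From mathcomp Require Import all_classical all_reals all_analysis.
Set Implicit Arguments. Unset Strict Implicit. Unset Printing Implicit Defensive.
Import Order.TTheory GRing.Theory Num.Theory.
Local Open Scope classical_set_scope.
Local Open Scope ring_scope.

Section Defs.
Context {R : realType} {T : Type}.

Definition qd_dball (dist : T -> T -> R) (x : T) (r : R) : set T :=
  [set y | dist x y < r].

Definition qd_quasi_distance (dist : T -> T -> R) (tau : R) : Prop :=
  [/\ forall x y, 0 <= dist x y,
      forall x y, dist x y = dist y x,
      forall x y, dist x y = 0 <-> x = y &
      forall x y z, dist x z <= tau * (dist x y + dist y z)].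
End Defs.

Definition qd_homogeneous_type {R : realType} {d : measure_display}
  (X : measurableType d) (dist : X -> X -> R)
  (mu : {measure set X -> \bar R}) (tau A : R) : Prop :=
  [/\ 1 <= tau, 1 <= A, qd_quasi_distance dist tau,
      forall x r, measurable (qd_dball dist x r) &
      forall x r, 0 < r ->
        (0 < mu (qd_dball dist x (2 * r)))%E /\
        (mu (qd_dball dist x (2 * r)) <= A%:E * mu (qd_dball dist x r))%E /\
        (mu (qd_dball dist x r) < +oo)%E].

Definition qd_symmetric_Markov_kernel {R : realType} {d : measure_display}
  (X : measurableType d) (mu : {measure set X -> \bar R}) (K : X -> X -> R) : Prop :=
  [/\ forall x y, 0 <= K x y,
      forall x y, K x y = K y x,
      measurable_fun setT (fun p : X * X => K p.1 p.2) &
      forall x, (\int[mu]_y (K x y)%:E = 1)%E].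

Definition qd_in_H_class {R : realType} {T : Type} (dist : T -> T -> R)
  (gamma H : R) (K : T -> T -> R) : Prop :=
  forall x y, y <> x ->
    (ereal_sup [set (K x eta)%:E | eta in qd_dball dist y (gamma * dist x y)]
     <= H%:E * ereal_inf [set (K x eta)%:E | eta in qd_dball dist y (gamma * dist x y)])%E.

Definition qd_maximal_kernel_op {R : realType} {d : measure_display}
  (X : measurableType d) (mu : {measure set X -> \bar R})
  (family : set (X -> X -> R)) (f : X -> R) (x : X) : \bar R :=
  ereal_sup [set `| \int[mu]_y (K x y * f y)%:E |%E | K in family].

(* Hardy-Littlewood maximal function: sup over d-balls B containing x of
   mu(B)^-1 int_B |f| dmu  (mu(B) is finite and positive in a space of
   homogeneous type, so it is inverted as a real number) *)
Definition qd_HL_maximal {R : realType} {d : measure_display}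
  (X : measurableType d) (dist : X -> X -> R) (mu : {measure set X -> \bar R})
  (f : X -> R) (x : X) : \bar R :=
  ereal_sup [set v | exists z r, 0 < r /\ qd_dball dist z r x /\
     (v = ((fine (mu (qd_dball dist z r)))^-1)%:E *
         \int[mu]_(y in qd_dball dist z r) `|f y|%:E)%E].

(* Main.v *)
Require Import Defs.
From HB Require Import structures.
From mathcomp Require Import all_boot all_order all_algebra.
From mathcomp Require Import all_classical all_reals all_analysis.
From mathcomp Require Import ring lra zify measurable_realfun.
Import Order.TTheory GRing.Theory Num.Theory.
Local Open Scope classical_set_scope.
Local Open Scope ring_scope.

Lemma aux2 (R : realFieldType) (s : R) : 0 < s -> 2 * s <= s -> False.
Proof. move=> *; lra. Qed.

Lemma aux_atom (R : realFieldType) (k a s V M0 : R) : 0 <= k -> 0 <= M0 -> k * s <= 1 ->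
  a * s <= V * M0 -> V <= 2 * s -> k * a * s <= 2 * M0.
Proof.
move=> k0 m0 h1 h2 h3.
have e1 : k * (a * s) <= k * (V * M0) by rewrite ler_wpM2l.
have e2 : V * M0 <= 2 * s * M0 by rewrite ler_wpM2r.
have e3 : k * (V * M0) <= k * (2 * s * M0) by rewrite ler_wpM2l.
have e4 : (k * s) * (2 * M0) <= 1 * (2 * M0) by rewrite ler_wpM2r // mulr_ge0.
lra.
Qed.

Definition enc (n : nat) : int := if odd n then - (n./2)%:Z - 1 else (n./2)%:Z.

Lemma enc_inj : injective enc.
Proof.
move=> n m; rewrite /enc.
have hn := odd_double_half n; have hm := odd_double_half m.
move: hn hm; rewrite -!mul2n.
case: (odd n); case: (odd m) => /= hn hm h; lia.
Qed.

Lemma enc_surj (p : int) : exists n, enc n = p.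
Proof.
case: p => m.
  by exists m.*2; rewrite /enc odd_double doubleK.
exists m.*2.+1; rewrite /enc /= odd_double /= uphalf_double.
rewrite NegzE; lia.
Qed.

Section Main.
Variables (R : realType) (d : measure_display) (X : measurableType d).
Variables (dist : X -> X -> R) (mu : {measure set X -> \bar R}) (tau A : R).
Hypothesis hom : qd_homogeneous_type dist mu tau A.
Local Notation B := (qd_dball dist).

Lemma ball_sub z r s : r <= s -> B z r `<=` B z s.
Proof. by move=> rs y; rewrite /qd_dball /= => h; exact: lt_le_trans h rs. Qed.

Lemma ball_meas z r : measurable (B z r).
Proof. by case: hom. Qed.

Lemma mu_ball_gt0 z r : 0 < r -> (0 < mu (B z r))%E.
Proof.
case: hom => _ _ _ _ dbl rp.
have [h _] := dbl z (r / 2) (divr_gt0 rp (ltr0Sn _ 1)).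
by rewrite mulrC -mulrA mulVf ?mulr1 in h.
Qed.

Lemma mu_ball_fin z r : 0 < r -> (mu (B z r) < +oo)%E.
Proof. by case: hom => _ _ _ _ dbl rp; have [_ [_ h]] := dbl z r rp. Qed.

Lemma mu_ball_fine z r : 0 < r ->
  mu (B z r) = (fine (mu (B z r)))%:E /\ 0 < fine (mu (B z r)).
Proof.
move=> rp; have h0 := mu_ball_gt0 z _ rp; have h1 := mu_ball_fin z _ rp.
have fn : mu (B z r) \is a fin_num by rewrite ge0_fin_numE // ltW.
split; first by rewrite fineK.
by rewrite -lte_fin fineK.
Qed.

Lemma dbl_iter z r n : 0 < r ->
  (mu (B z (2 ^+ n * r)) <= (A ^+ n)%:E * mu (B z r))%E.
Proof.
case: hom => _ h1A _ _ dbl rp; elim: n => [|n IH]; first by rewrite !expr0 mul1r mul1e.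
have p : 0 < 2 ^+ n * r by rewrite mulr_gt0 // exprn_gt0.
have [_ [h _]] := dbl z _ p.
rewrite exprS -mulrA; apply: (le_trans h).
rewrite exprS EFinM -muleA; apply: lee_wpmul2l; first by rewrite lee_fin (le_trans ler01).
exact: IH.
Qed.

Lemma Mf_ge0 (f : X -> R) x : (0 <= qd_HL_maximal dist mu f x)%E.
Proof.
case: hom => _ _ [_ _ dxx _] _ _.
apply: le_ereal_sup_tmp; exists (((fine (mu (B x 1)))^-1)%:E * \int[mu]_(y in B x 1) `|f y|%:E)%E.
  exists x, 1; split => //; split => //; rewrite /qd_dball /=.
  by have [_ ->] := dxx x x.
have [_ h] := mu_ball_fine x _ (@ltr01 R).
apply: mule_ge0; first by rewrite lee_fin invr_ge0 ltW.
by apply: integral_ge0 => y _; rewrite lee_fin.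
Qed.

Lemma Mf_ball (f : X -> R) x z r : 0 < r -> dist z x < r ->
  (\int[mu]_(y in B z r) `|f y|%:E <= (fine (mu (B z r)))%:E * qd_HL_maximal dist mu f x)%E.
Proof.
move=> rp zx.
have [_ Vp] := mu_ball_fine z _ rp.
set V := fine _ in Vp *.
have h : (((V^-1)%:E * \int[mu]_(y in B z r) `|f y|%:E) <= qd_HL_maximal dist mu f x)%E.
  by apply: ereal_sup_ubound; exists z, r.
rewrite -[X in (X <= _)%E]mul1e -(mulfV (lt0r_neq0 Vp)) EFinM -muleA.
by apply: lee_wpmul2l => //; rewrite lee_fin ltW.
Qed.


Variable gamma : R.
Hypothesis g0 : 0 < gamma.
Hypothesis gtau : gamma < tau^-1.

Definition lam := tau * (1 + gamma) / (1 - tau * gamma).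
Definition ell := ln lam.
Definition rad (k : int) := expR (k%:~R * ell).

Lemma tau_ge1 : 1 <= tau. Proof. by case: hom. Qed.
Lemma tg_lt1 : tau * gamma < 1.
Proof.
have t0 : 0 < tau by apply: lt_le_trans tau_ge1.
by rewrite -(mulfV (lt0r_neq0 t0)) ltr_pM2l.
Qed.

Lemma lam_gt1 : 1 < lam.
Proof.
have h := tg_lt1; have t1 := tau_ge1.
rewrite /lam ltr_pdivlMr ?subr_gt0 // mul1r.
have : 0 < tau * gamma by rewrite mulr_gt0 // (lt_le_trans ltr01).
nra.
Qed.

Lemma ell_gt0 : 0 < ell. Proof. exact: ln_gt0 lam_gt1. Qed.

Lemma rad_gt0 k : 0 < rad k. Proof. exact: expR_gt0. Qed.

Lemma rad_lt p q : (rad p < rad q) = (p < q).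
Proof. by rewrite /rad ltr_expR ltr_pM2r ?ell_gt0 // ltr_int. Qed.

Lemma rad_le p q : (rad p <= rad q) = (p <= q).
Proof. by rewrite /rad ler_expR ler_pM2r ?ell_gt0 // ler_int. Qed.

Lemma radS k : rad (k + 1) = rad k * lam.
Proof.
rewrite /rad intrD mulrDl mul1r expRD /ell lnK //.
by rewrite posrE (lt_trans ltr01 lam_gt1).
Qed.

Lemma rad_cover a : 0 < a -> exists k, rad k <= a < rad (k + 1).
Proof.
move=> a0; exists (Num.floor (ln a / ell)).
have e0 := ell_gt0.
rewrite /rad -[X in _ <= X < _](lnK a0) ler_expR ltr_expR.
rewrite -ler_pdivlMr // -ltr_pdivrMr //.
rewrite floor_le /=.
by rewrite -floor_lt_int ltrDl ltr01.
Qed.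


Lemma lam_u : lam * (1 - tau * gamma) = tau * (1 + gamma).
Proof. by rewrite /lam -mulrA mulVf ?mulr1 // lt0r_neq0 // subr_gt0 tg_lt1. Qed.

Lemma P_le_lam : tau * (1 + gamma) <= lam.
Proof.
have t1 := tau_ge1; have h := tg_lt1.
rewrite -lam_u; have l1 := lam_gt1.
have : 0 < tau * gamma by rewrite mulr_gt0 // (lt_le_trans ltr01).
nra.
Qed.

Lemma annulus_ball x y k eta : rad k <= dist x y < rad (k + 1) ->
  dist y eta < gamma * dist x y -> rad (k - 1) <= dist x eta < rad (k + 2).
Proof.
case: hom => t1 _ [d0 dsym _ tri] _ _ /andP[lo hi] de.
have t0 : 0 < tau by apply: lt_le_trans t1.
have tde : tau * dist y eta < tau * (gamma * dist x y) by rewrite ltr_pM2l.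
have tr1 := tri x y eta.
have tr2 := tri x eta y; rewrite (dsym eta y) in tr2.
have Pl := P_le_lam; have lu := lam_u; have l1 := lam_gt1.
have rk1 := radS k; have rk2 := radS (k + 1); rewrite -addrA in rk2.
have rk0 := radS (k - 1); rewrite subrK in rk0.
have r0 := rad_gt0 (k - 1); have r1 := rad_gt0 (k + 1).
apply/andP; split.
- have h1 : (1 - tau * gamma) * dist x y < tau * dist x eta by nra.
  have h2 : rad (k - 1) * (tau * (1 + gamma)) = rad k * (1 - tau * gamma).
    by rewrite -lu rk0 mulrA.
  have h3 : rad k * (1 - tau * gamma) <= dist x y * (1 - tau * gamma).
    by rewrite ler_pM2r // subr_gt0 tg_lt1.
  have h4 : rad (k - 1) * tau <= rad (k - 1) * (tau * (1 + gamma)).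
    by rewrite ler_pM2l // ler_peMr // ?(ltW t0) // lerDl ltW.
  rewrite -(ler_pM2l t0); apply: ltW; nra.
- rewrite rk2.
  have h2 : tau * (1 + gamma) * dist x y <= tau * (1 + gamma) * rad (k + 1).
    by apply: ler_wpM2l; [nra | exact: ltW].
  have h3 : tau * (1 + gamma) * rad (k + 1) <= rad (k + 1) * lam.
    by rewrite mulrC ler_pM2l.
  nra.
Qed.

Lemma ball_in_big x y k M : rad k <= dist x y < rad (k + 1) ->
  tau * (1 + lam) <= 2 ^+ M * gamma ->
  B x (rad (k + 1)) `<=` B y (2 ^+ M * (gamma * dist x y)).
Proof.
case: hom => t1 _ [d0 dsym _ tri] _ _ /andP[lo hi] hM z.
rewrite /qd_dball /= => hz.
have t0 : 0 < tau by apply: lt_le_trans t1.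
have tr := tri y x z; rewrite (dsym y x) in tr.
have rk1 := radS k; have l1 := lam_gt1; have r0 := rad_gt0 k.
have h1 : tau * (dist x y + dist x z) < tau * (dist x y + lam * dist x y).
  by rewrite ltr_pM2l // ltrD2l; apply: (lt_le_trans hz); rewrite rk1 mulrC ler_pM2l // (lt_trans ltr01).
have h2 : tau * (1 + lam) * dist x y <= 2 ^+ M * gamma * dist x y.
  by rewrite ler_pM2r // (lt_le_trans r0).
apply: (le_lt_trans tr); rewrite mulrA; nra.
Qed.


Variables (H : R) (K : X -> X -> R).
Hypothesis HK : qd_symmetric_Markov_kernel mu K.
Hypothesis HH : qd_in_H_class dist gamma H K.
Hypothesis H1 : 1 <= H.
Variable x : X.

Definition Ann k := B x (rad (k + 1)) `\` B x (rad k).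
Definition NN k := Ann (k - 1) `|` Ann k `|` Ann (k + 1).

Lemma mKx : measurable_fun setT (fun y => K x y).
Proof.
case: HK => _ _ mK _.
exact: (measurableT_comp mK (pair1_measurable x)).
Qed.

Lemma mKxE D : measurable_fun D (fun y => (K x y)%:E).
Proof. by apply/measurable_EFinP; apply: measurable_funS mKx. Qed.

Lemma Kx_ge0 y : 0 <= K x y. Proof. by case: HK. Qed.

Lemma Kint_le1 D : measurable D -> (\int[mu]_(y in D) (K x y)%:E <= 1)%E.
Proof.
move=> mD; case: HK => K0 _ _ K1; rewrite -(K1 x).
apply: ge0_subset_integral => //; first exact: mKxE.
by move=> y _; rewrite lee_fin.
Qed.

Lemma Ann_meas k : measurable (Ann k).
Proof. exact: measurableD (ball_meas _ _) (ball_meas _ _). Qed.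

Lemma NN_meas k : measurable (NN k).
Proof. by apply: measurableU; [apply: measurableU|]; exact: Ann_meas. Qed.

Lemma in_Ann y k : Ann k y <-> rad k <= dist x y < rad (k + 1).
Proof.
rewrite /Ann /qd_dball /=; split.
  by case=> h1 /negP; rewrite -leNgt => h2; rewrite h1 h2.
by case/andP=> h1 h2; split => //; apply/negP; rewrite -leNgt.
Qed.

Lemma ball_sub_N y k : Ann k y -> B y (gamma * dist x y) `<=` NN k.
Proof.
move=> /in_Ann hy e; rewrite /qd_dball /= => he.
have /andP[lo hi] := annulus_ball _ _ _ _ hy he.
rewrite /NN; case: (ltP (dist x e) (rad k)) => h1.
  by left; left; apply/in_Ann; rewrite subrK lo h1.
case: (ltP (dist x e) (rad (k + 1))) => h2.
  by left; right; apply/in_Ann; rewrite h1 h2.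
by right; apply/in_Ann; rewrite h2 -addrA.
Qed.

Lemma key y k M : Ann k y -> tau * (1 + lam) <= 2 ^+ M * gamma ->
  ((K x y)%:E * mu (B x (rad (k + 1))) <=
   (A ^+ M * H)%:E * \int[mu]_(e in NN k) (K x e)%:E)%E.
Proof.
move=> yA hM; have := yA; move=> /in_Ann /andP[lo hi].
have r0 := rad_gt0 k.
have a0 : 0 < dist x y by apply: lt_le_trans lo.
have ga0 : 0 < gamma * dist x y by rewrite mulr_gt0.
have yx : y <> x by move=> yx; rewrite yx in a0; case: hom => _ _ [_ _ dxx _] _ _;
  have [_ h] := dxx x x; rewrite h // ltxx in a0.
have yy : B y (gamma * dist x y) y.
  by rewrite /qd_dball /=; case: hom => _ _ [_ _ dxx _] _ _; have [_ ->] := dxx y y.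
have H0 : 0 <= H by apply: le_trans H1.
have harn : forall e, B y (gamma * dist x y) e -> ((K x y)%:E <= H%:E * (K x e)%:E)%E.
  move=> e he; apply: le_trans (le_trans (HH _ _ yx) _).
  - by apply: ereal_sup_ubound; exists y.
  - apply: lee_wpmul2l; first by rewrite lee_fin.
    by apply: ereal_inf_lbound; exists e.
set Bb := B y (gamma * dist x y).
have mBb : measurable Bb by apply: ball_meas.
have step1 : ((K x y)%:E * mu Bb <= H%:E * \int[mu]_(e in NN k) (K x e)%:E)%E.
  rewrite -integral_cst //.
  apply: (@le_trans _ _ (\int[mu]_(e in Bb) (H%:E * (K x e)%:E))%E).
    apply: ge0_le_integral => //.
    - by move=> e _; rewrite /cst lee_fin Kx_ge0.
    - exact: emeasurable_funM (measurable_cst _) (mKxE _).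
  rewrite ge0_integralZl_EFin //; last 2 first.
    - by move=> e _; rewrite lee_fin Kx_ge0.
    - exact: mKxE.
  apply: lee_wpmul2l; first by rewrite lee_fin.
  apply: ge0_subset_integral => //; first exact: NN_meas.
  - exact: mKxE.
  - by move=> e _; rewrite lee_fin Kx_ge0.
  - exact: ball_sub_N.
have step2 : (mu (B x (rad (k + 1))) <= (A ^+ M)%:E * mu Bb)%E.
  apply: le_trans (dbl_iter _ _ _ ga0).
  apply: le_measure; [rewrite inE; exact: ball_meas | rewrite inE; exact: ball_meas |].
  by apply: ball_in_big => //; rewrite lo hi.
have A0 : 0 <= A ^+ M by rewrite exprn_ge0 // (le_trans ler01) //; case: hom.
apply: (@le_trans _ _ ((K x y)%:E * ((A ^+ M)%:E * mu Bb)))%E.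
  by apply: lee_wpmul2l => //; rewrite lee_fin Kx_ge0.
rewrite muleCA EFinM -muleA.
by apply: lee_wpmul2l => //; rewrite lee_fin.
Qed.


Variable f : X -> R.
Hypothesis mf : measurable_fun setT f.

Lemma mKf D : measurable_fun D (fun y => (K x y * `|f y|)%:E).
Proof.
apply/measurable_EFinP; apply: measurable_funS (measurable_funM mKx _) => //.
exact: measurableT_comp (@normr_measurable _ _) mf.
Qed.

Lemma mfa D : measurable_fun D (fun y => (`|f y|)%:E).
Proof.
apply/measurable_EFinP; apply: measurable_funS (measurableT_comp (@normr_measurable _ _) mf) => //.
Qed.

Lemma NN_fin k : (\int[mu]_(e in NN k) (K x e)%:E)%E = (fine (\int[mu]_(e in NN k) (K x e)%:E)%E)%:E
  /\ 0 <= fine (\int[mu]_(e in NN k) (K x e)%:E)%E <= 1.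
Proof.
have h1 := Kint_le1 _ (NN_meas k).
have h0 : (0 <= \int[mu]_(e in NN k) (K x e)%:E)%E.
  by apply: integral_ge0 => e _; rewrite lee_fin Kx_ge0.
have fn : (\int[mu]_(e in NN k) (K x e)%:E)%E \is a fin_num.
  by rewrite ge0_fin_numE // (le_lt_trans h1) // ltry.
split; first by rewrite fineK.
by rewrite fine_ge0 //= -lee_fin fineK.
Qed.

Lemma ann_bound k M M0 : qd_HL_maximal dist mu f x = M0%:E ->
  tau * (1 + lam) <= 2 ^+ M * gamma ->
  (\int[mu]_(y in Ann k) (K x y * `|f y|)%:E <=
   (A ^+ M * H * fine (\int[mu]_(e in NN k) (K x e)%:E)%E * M0)%:E)%E.
Proof.
move=> hMf hM.
have r1 := rad_gt0 (k + 1).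
have [hV Vp] := mu_ball_fine x _ r1.
set V := fine (mu (B x (rad (k + 1)))) in hV Vp *.
have [hI /andP[m0 m1]] := NN_fin k.
set m := fine _ in hI m0 m1.
have A0 : 0 <= A ^+ M by rewrite exprn_ge0 // (le_trans ler01) //; case: hom.
have H0 : 0 <= H by apply: le_trans H1.
set c := A ^+ M * H * m / V.
have c0 : 0 <= c by rewrite divr_ge0 ?(ltW Vp) // !mulr_ge0.
have pw : forall y, Ann k y -> K x y <= c.
  move=> y yA; have := key _ _ _ yA hM; rewrite hV hI -!EFinM lee_fin.
  by rewrite /c ler_pdivlMr.
have M00 : 0 <= M0 by rewrite -lee_fin -hMf Mf_ge0.
apply: (@le_trans _ _ (\int[mu]_(y in Ann k) (c%:E * (`|f y|)%:E))%E).
  apply: ge0_le_integral; first exact: Ann_meas.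
  - by move=> y _; rewrite lee_fin mulr_ge0 ?Kx_ge0.
  - exact: mKf.
  - exact: emeasurable_funM (measurable_cst _) (mfa _).
  - by move=> y yA; rewrite -EFinM lee_fin ler_wpM2r // pw.
rewrite ge0_integralZl_EFin //; last first.
  all: try exact: Ann_meas; try exact: mfa; try (by move=> y _; rewrite lee_fin).
apply: (@le_trans _ _ (c%:E * (V%:E * M0%:E)))%E; last first.
  by rewrite -!EFinM lee_fin /c mulrA divfK // lt0r_neq0.
apply: lee_wpmul2l; first by rewrite lee_fin.
rewrite -hMf; apply: (le_trans _ (Mf_ball f x x _ r1 _)).
  apply: ge0_subset_integral => //; first exact: Ann_meas.
  - exact: ball_meas.
  - exact: mfa.
  - by move=> y [].
by case: hom => _ _ [_ _ dxx _] _ _; have [_ ->] := dxx x x.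
Qed.


Lemma single_eq : [set x] = \bigcap_n B x (n.+1%:R^-1).
Proof.
case: hom => _ _ [d0 _ dxx _] _ _.
apply/seteqP; split => y.
  by move=> -> n _; rewrite /qd_dball /=; have [_ ->] := dxx x x.
move=> hy; apply/esym; apply/(dxx x y).
apply/eqP; apply/negP => /negP ne.
have dp : 0 < dist x y by rewrite lt0r ne d0.
have ip : 0 < (dist x y)^-1 by rewrite invr_gt0.
have := archi_boundP (ltW ip); set n := Num.Def.archi_bound _ => g.
have h := hy n I; rewrite /qd_dball /= in h.
rewrite -(ltr_pM2r dp) mulVf ?lt0r_neq0 // in g.
rewrite -[X in _ < X]div1r ltr_pdivlMr // in h.
rewrite -addn1 natrD in h.
nra.
Qed.

Lemma single_meas : measurable [set x].
Proof. by rewrite single_eq; apply: bigcapT_measurable => n; exact: ball_meas. Qed.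

Lemma exists_small_ball s0 : mu [set x] = s0%:E -> 0 < s0 ->
  exists rho, 0 < rho /\ (mu (B x rho) <= (2 * s0)%:E)%E.
Proof.
move=> hs s0p.
pose F n := B x (n.+1%:R^-1).
have cv : ((mu \o F) n @[n --> \oo] --> mu (\bigcap_n F n))%classic.
  apply: nonincreasing_cvg_mu.
  - by apply: mu_ball_fin; rewrite invr_gt0.
  - by move=> n; exact: ball_meas.
  - by apply: bigcapT_measurable => n; exact: ball_meas.
  - move=> n m nm; rewrite subsetEset; apply: ball_sub.
    rewrite lef_pV2 ?posrE // ler_nat.
    by [].
rewrite /F -single_eq hs in cv.
apply/not_existsP => hn.
have hall : forall n, ((2 * s0)%:E <= mu (F n))%E.
  move=> n; have := hn (n.+1%:R^-1); move/not_andP => [].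
    by rewrite invr_gt0.
  by move/negP; rewrite -ltNge => /ltW.
have := lime_ge (cvgP _ cv) (nearW _ hall).
rewrite (cvg_lim (@ereal_hausdorff R) cv) lee_fin.
move=> h; have h2 : 2 * s0 <= s0 by apply: h; exact: _.
exact: aux2 s0p h2.
Qed.

Lemma atom_bound M0 : qd_HL_maximal dist mu f x = M0%:E ->
  (\int[mu]_(y in [set x]) (K x y * `|f y|)%:E <= (2 * M0)%:E)%E.
Proof.
move=> hMf.
have M00 : 0 <= M0 by rewrite -lee_fin -hMf Mf_ge0.
have mx := single_meas.
have int1 : forall g : X -> R,
    (\int[mu]_(y in [set x]) (g y)%:E = (g x)%:E * mu [set x])%E.
  by move=> g; rewrite -integral_cst //; apply: eq_integral => y; rewrite inE /= => ->.
rewrite int1.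
have sfin : (mu [set x] < +oo)%E.
  apply: le_lt_trans (mu_ball_fin x _ (@ltr01 R)).
  apply: le_measure; [by rewrite inE | rewrite inE; exact: ball_meas |].
  by move=> y ->; rewrite /qd_dball /=; case: hom => _ _ [_ _ dxx _] _ _; have [_ ->] := dxx x x.
case: (eqVneq (mu [set x]) 0%E) => [->|s0].
  by rewrite mule0 lee_fin mulr_ge0.
have fn : mu [set x] \is a fin_num by rewrite ge0_fin_numE.
set s := fine (mu [set x]).
have hs : mu [set x] = s%:E by rewrite fineK.
have sp : 0 < s.
  rewrite lt0r; apply/andP; split; last by rewrite fine_ge0.
  by apply/eqP => h; move: s0; rewrite hs h eqxx.
have [rho [rp hrho]] := exists_small_ball _ hs sp.
have [hV Vp] := mu_ball_fine x _ rp.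
have k1 : K x x * s <= 1.
  by have := Kint_le1 _ mx; rewrite int1 hs -EFinM lee_fin.
have f1 : `|f x| * s <= fine (mu (B x rho)) * M0.
  have := Mf_ball f x x _ rp.
  have -> : dist x x = 0 by case: hom => _ _ [_ _ dxx _] _ _; have [_ ->] := dxx x x.
  move=> /(_ rp) h.
  have h2 : (\int[mu]_(y in [set x]) (`|f y|)%:E <= \int[mu]_(y in B x rho) (`|f y|)%:E)%E.
    apply: ge0_subset_integral => //; first exact: ball_meas.
    - exact: mfa.
    - by move=> y ->; rewrite /qd_dball /=; case: hom => _ _ [_ _ dxx _] _ _; have [_ ->] := dxx x x.
  have := le_trans h2 h; rewrite int1 hs hMf -!EFinM lee_fin.
  by [].
have V2 : fine (mu (B x rho)) <= 2 * s by rewrite -lee_fin -hV.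
rewrite hs -EFinM lee_fin.
exact: aux_atom (Kx_ge0 x) M00 k1 f1 V2.
Qed.

Lemma Ann_disj p q y : Ann p y -> Ann q y -> p = q.
Proof.
move=> /in_Ann/andP[lp hp] /in_Ann/andP[lq hq].
have : rad p < rad (q + 1) by apply: le_lt_trans lp hq.
rewrite rad_lt ltzD1 => pq.
have : rad q < rad (p + 1) by apply: le_lt_trans lq hp.
rewrite rad_lt ltzD1 => qp.
by apply/le_anti; rewrite pq qp.
Qed.

Lemma Ann_triv j : trivIset setT (fun n => Ann (enc n + j)).
Proof.
move=> n m _ _ [y [h1 h2]]; apply: enc_inj; apply: (addIr j).
exact: Ann_disj h1 h2.
Qed.

Lemma dxx0 : dist x x = 0.
Proof. by case: hom => _ _ [_ _ dxx _] _ _; have [_ ->] := dxx x x. Qed.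

Lemma x_notin_Ann k : ~ Ann k x.
Proof.
move/in_Ann/andP => [h _]; move: h; rewrite dxx0 leNgt.
by rewrite rad_gt0.
Qed.

Lemma cover : setT = [set x] `|` \bigcup_n Ann (enc n).
Proof.
apply/seteqP; split => y // _.
have [->|yx] := pselect (y = x); first by left.
right.
have a0 : 0 < dist x y.
  case: hom => _ _ [d0 _ dxx _] _ _.
  rewrite lt0r d0 andbT; apply/eqP => h; apply: yx; apply/esym.
  by apply/(dxx x y).
have [k hk] := rad_cover _ a0.
have [n hn] := enc_surj k.
by exists n => //; apply/in_Ann; rewrite hn.
Qed.

Lemma sumK_le1 j :
  (\sum_(0 <= n <oo) \int[mu]_(y in Ann (enc n + j)) (K x y)%:E <= 1)%E.
Proof.
have := ge0_integral_bigcup mu (F := fun n => Ann (enc n + j)) (f := fun y => (K x y)%:E)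
  (fun n => Ann_meas _) (mKxE _) _ (Ann_triv j).
move=> <-; last by move=> y _; rewrite lee_fin Kx_ge0.
apply: Kint_le1; apply: bigcup_measurable => n _; exact: Ann_meas.
Qed.

Lemma NN_split k : (\int[mu]_(e in NN k) (K x e)%:E =
  \int[mu]_(e in Ann (k - 1)) (K x e)%:E + \int[mu]_(e in Ann k) (K x e)%:E
  + \int[mu]_(e in Ann (k + 1)) (K x e)%:E)%E.
Proof.
have K0 : forall D, forall y, D y -> (0 <= (K x y)%:E)%E by move=> D y _; rewrite lee_fin Kx_ge0.
rewrite /NN ge0_integral_setU //.
all: try (by apply: measurableU; exact: Ann_meas); try exact: Ann_meas; try exact: mKxE.
all: try (apply/disj_setPS => y [[h1|h1] h2]; by have := Ann_disj _ _ _ h1 h2; lia).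
rewrite ge0_integral_setU //.
all: try exact: Ann_meas; try exact: mKxE.
all: try (apply/disj_setPS => y [h1 h2]; by have := Ann_disj _ _ _ h1 h2; lia).
all: by move=> y _; rewrite lee_fin Kx_ge0.
Qed.

Lemma total M : tau * (1 + lam) <= 2 ^+ M * gamma ->
  (\int[mu]_y (K x y * `|f y|)%:E <=
   (3 * (A ^+ M * H) + 2)%:E * qd_HL_maximal dist mu f x)%E.
Proof.
move=> hM.
have A0 : 0 <= A ^+ M by rewrite exprn_ge0 // (le_trans ler01) //; case: hom.
have H0 : 0 <= H by apply: le_trans H1.
have C0 : 0 < 3 * (A ^+ M * H) + 2.
  by rewrite ltr_wpDl // mulr_ge0 // mulr_ge0.
have := Mf_ge0 f x; case hMf : (qd_HL_maximal dist mu f x) => [M0| |] h0 //.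
  2: by rewrite mulry gtr0_sg // mul1e leey.
have M00 : 0 <= M0 by rewrite -lee_fin.
have Kf0 : forall D y, D y -> (0 <= (K x y * `|f y|)%:E)%E.
  by move=> D y _; rewrite lee_fin mulr_ge0 ?Kx_ge0.
have tr0 : trivIset setT (fun n => Ann (enc n)).
  by move=> n m _ _ [y [h1 h2]]; apply: enc_inj; exact: Ann_disj h1 h2.
rewrite cover ge0_integral_setU //.
all: try (by apply/disj_setPS => y [-> [n _ h]]; exact: x_notin_Ann h).
all: try exact: mKf; try (by apply: bigcup_measurable => n _; exact: Ann_meas); try exact: single_meas.
rewrite ge0_integral_bigcup //.
all: try exact: mKf; try (by move=> n; exact: Ann_meas).
all: try (by move=> *; rewrite lee_fin mulr_ge0 ?Kx_ge0).
set m := fun n => fine (\int[mu]_(e in NN (enc n)) (K x e)%:E)%E.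
set c := A ^+ M * H * M0.
have c0 : 0 <= c by rewrite /c !mulr_ge0.
have S1 : (\sum_(0 <= n <oo) \int[mu]_(y in Ann (enc n)) (K x y * `|f y|)%:E <=
    c%:E * \sum_(0 <= n <oo) (m n)%:E)%E.
  rewrite -nneseriesZl; last by move=> n _; rewrite lee_fin /m; have [_ /andP[]] := NN_fin (enc n).
  apply: lee_nneseries.
    by move=> n _ _; apply: integral_ge0 => y _; rewrite lee_fin mulr_ge0 ?Kx_ge0.
  move=> n _; rewrite -EFinM /c /m mulrAC.
  exact: ann_bound.
have S2 : (\sum_(0 <= n <oo) (m n)%:E <= 3%:E)%E.
  apply: (@le_trans _ _ (\sum_(0 <= n <oo) (\int[mu]_(e in Ann (enc n - 1)) (K x e)%:E
     + \int[mu]_(e in Ann (enc n)) (K x e)%:E + \int[mu]_(e in Ann (enc n + 1)) (K x e)%:E))%E).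
    apply: lee_nneseries.
      by move=> n _ _; rewrite lee_fin /m; have [_ /andP[]] := NN_fin (enc n).
    by move=> n _; rewrite /m -(NN_fin (enc n)).1 NN_split.
  have I0 : forall D, (0 <= \int[mu]_(e in D) (K x e)%:E)%E.
    by move=> D; apply: integral_ge0 => y _; rewrite lee_fin Kx_ge0.
  rewrite nneseriesD; last 2 first.
    - by move=> n _ _; rewrite adde_ge0.
    - by move=> n _ _.
  rewrite nneseriesD; last 2 first.
    - by move=> n _ _.
    - by move=> n _ _.
  have -> : (3%:E = 1%:E + 1%:E + 1%:E :> \bar R)%E by rewrite -!EFinD; congr EFin; ring.
  apply: leeD; first apply: leeD.
  - exact: (sumK_le1 (- 1)).
  - by under eq_eseriesr => n _ do rewrite -[enc n]addr0; exact: sumK_le1.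
  - exact: sumK_le1.
apply: (@le_trans _ _ ((2 * M0)%:E + (c * 3)%:E))%E.
  apply: leeD; first exact: atom_bound.
  apply: le_trans S1 _; rewrite [X in (_ <= X)%E]EFinM; apply: lee_wpmul2l => //.
rewrite -EFinD -EFinM lee_fin /c.
rewrite le_eqVlt; apply/orP; left; apply/eqP; ring.
Qed.

End Main.

Lemma exists_M (R : realType) (tau gamma : R) : 0 < gamma -> 1 <= tau ->
  gamma < tau^-1 -> exists M : nat, tau * (1 + lam R tau gamma) <= 2 ^+ M * gamma.
Proof.
move=> g0 t1 gt.
have t0 : 0 < tau by apply: lt_le_trans t1.
have tg : tau * gamma < 1 by rewrite -(mulfV (lt0r_neq0 t0)) ltr_pM2l.
have l0 : 0 <= lam R tau gamma.
  rewrite /lam; apply: divr_ge0; last by rewrite subr_ge0; exact: ltW.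
  by apply: mulr_ge0; [exact: ltW | rewrite addr_ge0 // ltW].
set c := tau * (1 + lam R tau gamma) / gamma.
have c0 : 0 <= c.
  rewrite /c; apply: divr_ge0; last exact: ltW.
  by apply: mulr_ge0; [exact: ltW | rewrite addr_ge0].
have := archi_boundP c0; set n := Num.Def.archi_bound _ => hc.
exists n.
have h : (n%:R : R) <= 2 ^+ n by rewrite -natrX ler_nat ltnW // ltn_expl.
rewrite -ler_pdivrMr //; exact: le_trans (ltW hc) h.
Qed.

Theorem theorem4p1 (R : realType) (tau A gamma H : R) :
  1 <= tau -> 1 <= A -> 0 < gamma -> gamma < tau^-1 -> 1 <= H ->
  exists C : R,
  forall (d : measure_display) (X : measurableType d) (dist : X -> X -> R)
         (mu : {measure set X -> \bar R}),
    qd_homogeneous_type dist mu tau A ->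
    mu setT = +oo%E ->
    forall family : set (X -> X -> R),
    (forall K, family K -> qd_symmetric_Markov_kernel mu K /\ qd_in_H_class dist gamma H K) ->
    forall f : X -> R, measurable_fun setT f ->
    forall x : X,
      (qd_maximal_kernel_op mu family f x <= C%:E * qd_HL_maximal dist mu f x)%E.
Proof.
move=> t1 A1 g0 gt H1.
have [M hM] := exists_M _ _ _ g0 t1 gt.
exists (3 * (A ^+ M * H) + 2).
move=> d X dist mu hom _ family hfam f mf x.
apply: ge_ereal_sup => _ [K hK <-].
have [HK HH] := hfam K hK.
have mKf : measurable_fun setT (fun y => (K x y * f y)%:E).
  apply/measurable_EFinP; apply: measurable_funM => //.
  by apply: mKx; exact: HK.
apply: le_trans (le_abse_integral _ _ mKf) _.
  by [].
have -> : (\int[mu]_(y in setT) `|(K x y * f y)%:E| = \int[mu]_y (K x y * `|f y|)%:E)%E.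
  apply: eq_integral => y _.
  by rewrite /= normrM ger0_norm //; apply: Kx_ge0; exact: HK.
by apply: total; eassumption.
Qed.
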